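(* Let $M\in\mathcal{L}(\ell_2,\ell_1)$ be defined by $(Mx)_k=x_k/k$ for $k\in\mathbb{N}$, let $d\ge0$ be an integer, and let $U\in\mathcal{L}_M$ be a $d$-diagonal operator. Then $\|\{U\}_M\|_{\mathcal{L}(\ell_2)}\le(2d+1)^{3/2}\|U\|_{\mathcal{L}(\ell_1)}$; i.e. $U\in\mathcal{L}_M^C$ with $C=\sqrt{(2d+1)^3}$.
   Context: $\ell_p$ is indexed by $\mathbb{N}$. An operator $U\in\mathcal{L}(\ell_1)$ is identified with its infinite matrix $(u_{nm})$, $(Ux)_n=\sum_m u_{nm}x_m$. $U$ is $d$-diagonal if $u_{nm}=0$ whenever $|n-m|>d$. $\mathcal{L}_M\subset\mathcal{L}(\ell_1)$ is the set of $U$ with $\operatorname{Im}(UM)\subset\operatorname{Im}M$; for $U\in\mathcal{L}_M$, $\{U\}_M:=M^{-1}UM\in\mathcal{L}(\ell_2)$ (matrix entries $\frac{n}{m}u_{nm}$). $\mathcal{L}_M^C$ is the set of $U\in\mathcal{L}_M$ with $\|\{U\}_M\|_{\mathcal{L}(\ell_2)}\le C\|U\|_{\mathcal{L}(\ell_1)}$. *)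

(* Defs.v *)
From HB Require Import structures.
From mathcomp Require Import all_boot all_order all_algebra.
From mathcomp Require Import all_classical all_reals all_analysis.
Set Implicit Arguments. Unset Strict Implicit. Unset Printing Implicit Defensive.
Import Order.TTheory GRing.Theory Num.Theory.
Local Open Scope classical_set_scope.
Local Open Scope ring_scope.

(* Sequences indexed by N = {1,2,...}; the Rocq index k : nat stands for k+1. *)
Section Defs.
Variable R : realType.
Definition seqR := nat -> R.

Definition enorm1 (x : seqR) : \bar R := (\sum_(0 <= k <oo) (`|x k|)%:E)%E.
Definition esqnorm2 (x : seqR) : \bar R := (\sum_(0 <= k <oo) ((x k) ^+ 2)%:E)%E.

Definition in_l1 (x : seqR) : Prop := (enorm1 x < +oo)%E.
Definition in_l2 (x : seqR) : Prop := (esqnorm2 x < +oo)%E.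

Definition norm1 (x : seqR) : R := fine (enorm1 x).
Definition norm2 (x : seqR) : R := Num.sqrt (fine (esqnorm2 x)).

(* U is a bounded linear operator on l1 (its values off l1 are irrelevant) *)
Definition is_bounded_op_l1 (U : seqR -> seqR) : Prop :=
  [/\ (forall x, in_l1 x -> in_l1 (U x)),
      (forall (a : R) x y, in_l1 x -> in_l1 y ->
          U (fun k => a * x k + y k) = (fun k => a * U x k + U y k)) &
      exists c : R, forall x, in_l1 x -> norm1 (U x) <= c * norm1 x].

Definition opnorm1 (U : seqR -> seqR) : R :=
  sup [set norm1 (U x) | x in [set x | in_l1 x /\ norm1 x <= 1]].

Definition unitv (m : nat) : seqR := fun k => if k == m then 1 else 0.

Definition entry (U : seqR -> seqR) (n m : nat) : R := U (unitv m) n.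

Definition d_diagonal (d : nat) (U : seqR -> seqR) : Prop :=
  forall n m : nat, (m + d < n)%N || (n + d < m)%N -> entry U n m = 0.

(* M : l2 -> l1, (Mx)_k = x_k / k   (k = index + 1) *)
Definition Mop (x : seqR) : seqR := fun k => x k / (k.+1)%:R.

Definition in_LM (U : seqR -> seqR) : Prop :=
  forall x, in_l2 x -> exists y, in_l2 y /\ U (Mop x) = Mop y.

(* {U}_M = M^{-1} U M  (M is injective) *)
Definition conjM (U : seqR -> seqR) (x : seqR) : seqR :=
  fun k => (k.+1)%:R * U (Mop x) k.
End Defs.

(* Main.v *)
Require Import Defs.
From mathcomp Require Import all_boot all_order all_algebra.
From mathcomp Require Import all_classical all_reals all_analysis.
From mathcomp.algebra_tactics Require Import ring lra.
From mathcomp Require Import zify.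
Import Order.TTheory GRing.Theory Num.Theory.
Local Open Scope ring_scope.

Section H.
Context {R : realType}.
Implicit Types x y : seqR R.

Lemma enorm1_ge0 x : (0 <= enorm1 x)%E.
Proof. by apply: nneseries_ge0 => k _ _; rewrite lee_fin. Qed.

Lemma esqnorm2_ge0 x : (0 <= esqnorm2 x)%E.
Proof. by apply: nneseries_ge0 => k _ _; rewrite lee_fin sqr_ge0. Qed.

Lemma norm1_ge0 x : 0 <= norm1 x.
Proof. exact/fine_ge0/enorm1_ge0. Qed.

Lemma in_l1_fin x : in_l1 x -> enorm1 x \is a fin_num.
Proof. by move=> h; rewrite ge0_fin_numE// enorm1_ge0. Qed.

Lemma norm1E x : in_l1 x -> enorm1 x = (norm1 x)%:E.
Proof. by move=> h; rewrite /norm1 fineK// in_l1_fin. Qed.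

Lemma coord_le x n : in_l1 x -> `|x n| <= norm1 x.
Proof.
move=> h; rewrite -lee_fin -norm1E//.
apply: le_trans (nneseries_lim_ge n.+1 _); last by move=> k _ _; rewrite lee_fin.
by rewrite big_nat_recr//= leeDr// sume_ge0// => k _; rewrite lee_fin.
Qed.


Lemma in_l1_le x y : (forall k, `|x k| <= `|y k|) -> in_l1 y ->
  in_l1 x /\ norm1 x <= norm1 y.
Proof.
move=> hxy hy.
have h : (enorm1 x <= enorm1 y)%E.
  by apply: lee_nneseries => [k _ _|k _]; rewrite lee_fin.
have hx : in_l1 x by apply: le_lt_trans hy.
split => //; rewrite -lee_fin -!norm1E//.
Qed.

Lemma enorm1_unitv m : enorm1 (unitv R m) = 1%E.
Proof.
rewrite /enorm1 (@nneseriesD1 _ _ m xpredT)//.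
rewrite /unitv eqxx normr1 eseries0 ?adde0// => k _ /andP[_ /negbTE ->].
by rewrite normr0.
Qed.

Lemma unitv_l1 m : in_l1 (unitv R m) /\ norm1 (unitv R m) = 1.
Proof. by rewrite /in_l1 /norm1 enorm1_unitv; split => //; rewrite ltry. Qed.

Definition tailv y N : seqR R := fun k => if (N <= k)%N then y k else 0.

Lemma enorm1_tailv y N :
  enorm1 (tailv y N) = (\sum_(N <= k <oo) (`|y k|)%:E)%E.
Proof.
rewrite /enorm1 (nneseries_split 0 N); last by move=> k _; rewrite lee_fin.
rewrite add0n big_nat_cond big1 ?add0e; last first.
  by move=> k /andP[/andP[_ kN] _]; rewrite /tailv leqNgt kN normr0.
apply/congr_lim/funext => n; apply: eq_big_nat => k /andP[Nk _].
by rewrite /tailv Nk.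
Qed.


Lemma tail_small y eps K : in_l1 y -> 0 < eps ->
  exists N, (K <= N)%N /\ norm1 (tailv y N) < eps.
Proof.
move=> hy e0.
have hc := @nneseries_tail_cvg R (fun k => (`|y k|)%:E) xpredT hy
  (fun k _ => ltac:(by rewrite lee_fin)).
move/fine_cvgP: hc => [hfin /cvgrPdist_lt/(_ eps e0) hlt].
have hall : \forall N \near \oo%classic, [/\ (K <= N)%N,
   (\sum_(N <= k <oo) (`|y k|)%:E)%E \is a fin_num &
   `|0 - fine (\sum_(N <= k <oo) (`|y k|)%:E)%E| < eps].
  by near=> N; split; [near: N; exact: nbhs_infty_ge|near: N|near: N].
case: hall => M _ hM.
have [KN fN lN] := hM M (leqnn M).
exists M; split => //.
by rewrite /norm1 enorm1_tailv; move: lN; rewrite sub0r normrN ger0_norm // fine_ge0 // nneseries_ge0.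
Unshelve. all: by end_near.
Qed.


Lemma tailv_l1 y N : in_l1 y -> in_l1 (tailv y N).
Proof.
move=> hy; apply: (@in_l1_le (tailv y N) y _ hy).1 => k; rewrite /tailv.
by case: ifP => _ //; rewrite normr0.
Qed.

Lemma tailvS y N : tailv y N = (fun k => y N * unitv R N k + tailv y N.+1 k).
Proof.
apply/funext => k; rewrite /tailv /unitv.
case: (ltngtP N k) => [Nk|kN|<-].
- by rewrite mulr0 add0r.
- by rewrite mulr0 addr0.
- by rewrite mulr1 addr0.
Qed.

Lemma decomp (U : seqR R -> seqR R) y : is_bounded_op_l1 U -> in_l1 y ->
  forall N n, U y n = \sum_(m < N) y m * entry U n m + U (tailv y N) n.
Proof.
case=> hl1 hlin _ hy; elim=> [|N IH] n.
  by rewrite big_ord0 add0r.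
rewrite IH big_ord_recr /= -addrA; congr (_ + _).
rewrite tailvS (hlin (y N) (unitv R N) (tailv y N.+1)) //.
- exact: (unitv_l1 N).1.
- exact: tailv_l1.
Qed.


Lemma coordU (U : seqR R -> seqR R) d y n : is_bounded_op_l1 U ->
  d_diagonal d U -> in_l1 y ->
  U y n = \sum_(m < n + d + 1) y m * entry U n m.
Proof.
move=> hU hd hy; have [hl1 _ [c hc]] := hU.
apply/eqP; rewrite -subr_eq0 -normr_le0.
apply/ler_addgt0Pr => e e0; rewrite add0r.
pose c' := `|c| + 1.
have c'0 : 0 < c' by rewrite /c' ltr_wpDl.
have [N [KN hN]] := @tail_small y (e / c') (n + d + 1) hy (divr_gt0 e0 c'0).
rewrite (@decomp U y hU hy N n).
have -> : \sum_(m < N) y m * entry U n m = \sum_(m < n + d + 1) y m * entry U n m.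
  rewrite -(subnKC KN) big_split_ord /= [X in _ + X]big1 ?addr0 //.
  move=> i _; rewrite (hd n _) ?mulr0 //; apply/orP; right => /=.
  by apply: leq_trans (leq_addr i _); rewrite addn1.
rewrite addrC addKr.
apply: le_trans (@coord_le (U (tailv y N)) n (hl1 _ (@tailv_l1 y N hy))) _.
apply: le_trans (hc _ (@tailv_l1 y N hy)) _.
apply: (@le_trans _ _ (c' * norm1 (tailv y N))).
  apply: ler_wpM2r; first exact: norm1_ge0.
  by rewrite /c' (le_trans (ler_norm c)) // lerDl.
have c'n0 : c' != 0 by rewrite gt_eqF.
rewrite -[leRHS](divfK c'n0 e).
by rewrite mulrC ler_pM2r // ltW.
Qed.


Definition isq (k : nat) : R := ((k.+1)%:R ^+ 2)^-1.

Lemma isq_ge0 k : 0 <= isq k.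
Proof. by rewrite /isq invr_ge0 sqr_ge0. Qed.

Lemma isq_partial N : \sum_(k < N) isq k <= 2 - 2 / (N.+1)%:R.
Proof.
elim: N => [|N IH]; first by rewrite big_ord0 divr1 subrr.
rewrite big_ord_recr /=.
apply: (@le_trans _ _ (2 - 2 / N.+1%:R + isq N)); first by rewrite lerD2r.
rewrite /isq; set a : R := (N.+1)%:R.
have a1 : 1 <= a by rewrite /a ler1n.
have -> : (N.+2)%:R = a + 1 by rewrite /a natr1.
have a0 : a != 0 by rewrite gt_eqF // (lt_le_trans ltr01 a1).
have a10 : a + 1 != 0 by rewrite gt_eqF // ltr_wpDl // (le_trans ler01 a1).
rewrite -subr_ge0; clearbody a.
have -> : 2 - 2 / (a + 1) - (2 - 2 / a + (a ^+ 2)^-1) = (a - 1) / (a ^+ 2 * (a + 1)).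
  by field; rewrite a0 a10.
apply: divr_ge0; first by rewrite subr_ge0.
by apply: mulr_ge0; [exact: sqr_ge0 | lra].
Qed.

Lemma isq_series : (\sum_(0 <= k <oo) (isq k)%:E <= 2%:E)%E.
Proof.
apply: lime_le; first by apply: is_cvg_nneseries => k _ _; rewrite lee_fin isq_ge0.
apply: nearW => N; rewrite sumEFin lee_fin big_mkord.
apply: le_trans (isq_partial N) _; rewrite lerBlDr lerDl.
by rewrite divr_ge0.
Qed.

Lemma Mop_l1 x : in_l2 x -> in_l1 (Mop x).
Proof.
move=> hx; rewrite /in_l1 /enorm1.
apply: (@le_lt_trans _ _ (\sum_(0 <= k <oo) ((x k ^+ 2)%:E + (isq k)%:E))%E).
  apply: lee_nneseries => [k _ _|k _]; first by rewrite lee_fin.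
  rewrite -EFinD lee_fin /Mop /isq normrM normfV (ger0_norm (ler0n _ _)).
  rewrite -exprVn -real_normK ?num_real //.
  set a := `|x k|; set b := (k.+1)%:R^-1.
  have a0 : 0 <= a by rewrite /a normr_ge0.
  have b0 : 0 <= b by rewrite invr_ge0.
  nra.
rewrite nneseriesD; last 2 first.
- by move=> k _ _; rewrite lee_fin sqr_ge0.
- by move=> k _ _; rewrite lee_fin isq_ge0.
apply: lte_add_pinfty; first exact: hx.
by apply: le_lt_trans isq_series _; rewrite ltry.
Qed.


Lemma cs_sum (K : nat) (a z : nat -> R) :
  (\sum_(m < K) a m * z m) ^+ 2 <=
  (\sum_(m < K) `|a m|) * (\sum_(m < K) `|a m| * z m ^+ 2).
Proof.
set A := \sum_(m < K) `|a m|; set S := \sum_(m < K) `|a m| * z m ^+ 2.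
set P := \sum_(m < K) `|a m| * `|z m|.
have hP : `|\sum_(m < K) a m * z m| <= P.
  by apply: le_trans (ler_norm_sum _ _ _) _; apply: ler_sum => i _; rewrite normrM.
have P2 : P * P <= A * S.
  have e1 : A * S = \sum_(i < K) \sum_(j < K) `|a i| * (`|a j| * z j ^+ 2).
    by rewrite /A big_distrl; apply: eq_bigr => i _; rewrite /S big_distrr.
  have e2 : A * S = \sum_(i < K) \sum_(j < K) (`|a i| * z i ^+ 2) * `|a j|.
    by rewrite mulrC /S big_distrl; apply: eq_bigr => i _; rewrite /A big_distrr.
  have e3 : P * P = \sum_(i < K) \sum_(j < K) (`|a i| * `|z i|) * (`|a j| * `|z j|).
    by rewrite {1}/P big_distrl; apply: eq_bigr => i _; rewrite /P big_distrr.
  rewrite -(@ler_pM2r _ 2) // !mulrDr !mulr1 {1}e1 e2 -big_split e3 -big_split /=.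
  apply: ler_sum => i _; rewrite -!big_split; apply: ler_sum => j _ /=.
  have ai := normr_ge0 (a i); have aj := normr_ge0 (a j).
  have zi := normr_ge0 (z i); have zj := normr_ge0 (z j).
  rewrite -[z i ^+ 2]real_normK ?num_real // -[z j ^+ 2]real_normK ?num_real //.
  have := mulr_ge0 (mulr_ge0 ai aj) (sqr_ge0 (`|z i| - `|z j|)); nra.
rewrite -real_normK ?num_real //; apply: le_trans P2.
by apply: ler_pM => //; exact: normr_ge0.
Qed.


Lemma col_bound (U : seqR R -> seqR R) m : is_bounded_op_l1 U ->
  norm1 (U (unitv R m)) <= opnorm1 U.
Proof.
case=> hl1 hlin [c hc]; apply: ub_le_sup.
- exists `|c| => _ [z [hz hz1] <-].
  apply: le_trans (hc z hz) _.
  apply: le_trans (_ : `|c| * norm1 z <= _).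
    by apply: ler_wpM2r; [exact: norm1_ge0 | exact: ler_norm].
  by rewrite -[leRHS]mulr1; apply: ler_wpM2l.
- by exists (unitv R m) => //; have [h1 h2] := unitv_l1 m; split => //; rewrite h2.
Qed.

Lemma ratio n m d : (n <= m + d)%N -> (n.+1)%:R / (m.+1)%:R <= (d.+1)%:R :> R.
Proof.
move=> h; rewrite ler_pdivrMr ?ltr0Sn // -natrM ler_nat; nia.
Qed.

Lemma fin_series (f : nat -> R) K : (forall m, 0 <= f m) ->
  (forall m, (K <= m)%N -> f m = 0) ->
  (\sum_(0 <= m <oo) (f m)%:E = (\sum_(m < K) f m)%:E)%E.
Proof.
move=> f0 fK; rewrite (nneseries_split 0 K); last by move=> k _; rewrite lee_fin.
rewrite add0n eseries0 ?adde0; last by move=> i Ki _; rewrite fK.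
by rewrite sumEFin big_mkord.
Qed.

End H.

Theorem lemma6 (R : realType) (d : nat) (U : seqR R -> seqR R) :
  is_bounded_op_l1 U -> d_diagonal d U -> in_LM U ->
  forall x : seqR R, in_l2 x ->
    norm2 (conjM U x) <= Num.sqrt (((2 * d + 1) ^ 3)%N%:R) * opnorm1 U * norm2 x.
Proof.
move=> hU hd _ x hx.
have [hl1 hlin _] := hU.
set B := opnorm1 U.
set y := Mop x.
have hy : in_l1 y := Mop_l1 x hx.
have B0 : 0 <= B := le_trans (norm1_ge0 _) (col_bound U 0 hU).
pose u n m := entry U n m.
pose a n m : R := (n.+1)%:R / (m.+1)%:R * u n m.
have hu0 n m : (n + d < m)%N -> u n m = 0.
  by move=> h; apply: hd; rewrite h orbT.
have hu0' n m : (m + d < n)%N -> u n m = 0.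
  by move=> h; apply: hd; rewrite h.
have huB n m : `|u n m| <= B.
  apply: le_trans (col_bound U m hU).
  exact: (coord_le (U (unitv R m)) n (hl1 _ (unitv_l1 m).1)).
have ha n m : `|a n m| <= (d.+1)%:R * `|u n m|.
  case: (leqP n (m + d)) => h.
    rewrite /a normrM ger0_norm; last by rewrite divr_ge0.
    by apply: ler_wpM2r; [exact: normr_ge0 | exact: ratio].
  by rewrite /a hu0' // mulr0 normr0 mulr0.
have hconj n : conjM U x n = \sum_(m < n + d + 1) a n m * x m.
  rewrite /conjM (coordU U d y n hU hd hy) big_distrr; apply: eq_bigr => m _.
  rewrite /a /y /Mop /u; change (n.+1%:R * (x m / m.+1%:R * entry U n m) = n.+1%:R / m.+1%:R * entry U n m * x m); ring.
pose Rm : R := (2 * d + 1)%N%:R * ((d.+1)%:R * B).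
have dB0 : 0 <= (d.+1)%:R * B by rewrite mulr_ge0.
have hrow n : \sum_(m < n + d + 1) `|a n m| <= Rm.
  rewrite -(big_mkord xpredT (fun m => `|a n m|)).
  have hnd : (n - d <= n + d + 1)%N by lia.
  rewrite (@big_cat_nat _ _ _ (n - d) 0 (n + d + 1) _ _ (leq0n _) hnd) /=.
  rewrite [X in X + _]big_nat_cond big1 ?add0r; last first.
    move=> i /andP[/andP[_ hi] _]; rewrite /a hu0' ?mulr0 ?normr0 //; lia.
  apply: le_trans (ler_sum_nat (G := fun _ => (d.+1)%:R * B) _) _.
    by move=> i _; apply: le_trans (ha n i) _; apply: ler_wpM2l.
  rewrite sumr_const_nat -[X in X <= _]mulr_natl /Rm ler_wpM2r // ler_nat; lia.
pose T n m : R := `|a n m| * x m ^+ 2.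
have T0 n m : 0 <= T n m by rewrite /T mulr_ge0 // sqr_ge0.
have hcs n : conjM U x n ^+ 2 <= Rm * \sum_(m < n + d + 1) T n m.
  rewrite hconj; apply: le_trans (cs_sum _ _ _) _.
  apply: ler_wpM2r; first by apply: sumr_ge0 => i _; exact: T0.
  exact: hrow.
have hfin n : (\sum_(m < n + d + 1) T n m)%:E = (\sum_(0 <= m <oo) (T n m)%:E)%E.
  rewrite (@fin_series _ (T n) (n + d + 1)) // => m hm.
  by rewrite /T /a hu0 ?mulr0 ?normr0 ?mul0r //; lia.
have hcol m : (\sum_(0 <= n <oo) (T n m)%:E <= ((d.+1)%:R * B * x m ^+ 2)%:E)%E.
  rewrite (@eq_eseriesr _ _ (fun n => (x m ^+ 2)%:E * (`|a n m|)%:E)%E); last first.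
    by move=> n _; rewrite -EFinM mulrC.
  have -> : ((d.+1)%:R * B * x m ^+ 2)%:E = ((x m ^+ 2)%:E * ((d.+1)%:R * B)%:E)%E by rewrite -EFinM mulrC.
  rewrite nneseriesZl //; apply: lee_wpmul2l; first by rewrite lee_fin sqr_ge0.
  apply: (@le_trans _ _ (\sum_(0 <= n <oo) ((d.+1)%:R)%:E * (`|u n m|)%:E)%E).
    by apply: lee_nneseries => n _; rewrite ?lee_fin // -EFinM lee_fin.
  rewrite nneseriesZl // EFinM; apply: lee_wpmul2l; first by rewrite lee_fin.
  have := col_bound U m hU; rewrite -lee_fin -norm1E; last exact: hl1 _ (unitv_l1 m).1.
  by [].
have Rm0 : 0 <= Rm by rewrite /Rm mulr_ge0.
have key : (esqnorm2 (conjM U x) <= (Rm * ((d.+1)%:R * B))%:E * esqnorm2 x)%E.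
  rewrite /esqnorm2.
  apply: (@le_trans _ _ (\sum_(0 <= n <oo) Rm%:E * (\sum_(0 <= m <oo) (T n m)%:E))%E).
    apply: lee_nneseries => [n _ _|n _]; first by rewrite lee_fin sqr_ge0.
    by rewrite -hfin -EFinM lee_fin.
  rewrite nneseriesZl; last by move=> n _; apply: nneseries_ge0 => m _ _; rewrite lee_fin.
  rewrite nneseries_interchange; last by move=> n m; rewrite lee_fin.
  rewrite -[((Rm * _)%:E)]/(Rm%:E * ((d.+1)%:R * B)%:E)%E -muleA; apply: lee_wpmul2l; first by rewrite lee_fin.
  rewrite -nneseriesZl; last by move=> m _; rewrite lee_fin sqr_ge0.
  apply: lee_nneseries => [m _ _|m _]; first by apply: nneseries_ge0 => n _ _; rewrite lee_fin.
  by rewrite -EFinM.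
have Qfin : esqnorm2 x \is a fin_num by rewrite ge0_fin_numE ?esqnorm2_ge0.
have E1fin : esqnorm2 (conjM U x) \is a fin_num.
  rewrite ge0_fin_numE ?esqnorm2_ge0 //; apply: le_lt_trans key _.
  by rewrite -(fineK Qfin) -EFinM ltry.
move: key; rewrite -(fineK Qfin) -(fineK E1fin) -EFinM lee_fin => key.
have hK : Rm * ((d.+1)%:R * B) <= ((2 * d + 1) ^ 3)%N%:R * B ^+ 2.
  have -> : Rm * ((d.+1)%:R * B) = ((2 * d + 1) * d.+1 * d.+1)%N%:R * B ^+ 2.
    by rewrite /Rm !natrM; ring.
  by apply: ler_wpM2r; [exact: sqr_ge0 | rewrite ler_nat; nia].
rewrite /norm2.
have Q0 : 0 <= fine (esqnorm2 x) by apply: fine_ge0; exact: esqnorm2_ge0.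
apply: le_trans (ler_wsqrtr (_ : fine (esqnorm2 (conjM U x)) <=
   ((2 * d + 1) ^ 3)%N%:R * B ^+ 2 * fine (esqnorm2 x))) _.
  by apply: le_trans key _; apply: ler_wpM2r.
rewrite sqrtrM; last by rewrite mulr_ge0 // sqr_ge0.
rewrite sqrtrM // sqrtr_sqr ger0_norm //.
Qed.
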